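(* Let $n = 3^{n_1}\cdot 4^{n_2}\cdot 5^{n_3}\cdot 7^{n_4}\cdot 8^{n_5}\cdot 11^{n_6}\cdot 23^{n_7}$, where $n_1,\dots,n_7$ are nonnegative integers. Then there exists a quasigroup $(Q,\cdot)$ with $|Q| = n$ satisfying the identity $x\cdot(y\cdot(y\cdot x)) = y$ for all $x,y\in Q$.
   Context: A quasigroup is a set $Q$ with a binary operation $\cdot$ such that for all $a,b\in Q$ each of the equations $a\cdot x = b$ and $y\cdot a = b$ has a unique solution $x\in Q$, resp. $y\in Q$. *)

(* Defs.v *)
From mathcomp Require Import all_boot.
Set Implicit Arguments. Unset Strict Implicit. Unset Printing Implicit Defensive.

Definition is_quasigroup (Q : Type) (op : Q -> Q -> Q) : Prop :=
  (forall a b : Q, exists! x : Q, op a x = b) /\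
  (forall a b : Q, exists! y : Q, op y a = b).

(* Main.v *)
Require Import Defs.
From mathcomp Require Import all_boot.

Definition good (n : nat) := exists (Q : finType) (op : Q -> Q -> Q),
    #|Q| = n /\ is_quasigroup op /\
    (forall x y : Q, op x (op y (op y x)) = y).

Lemma good1 : good 1.
Proof.
exists (unit : finType), (fun _ _ => tt); split; first by rewrite card_unit.
split; last by case; case.
split=> a b; exists tt; (split; [by case: b| by case]).
Qed.

Lemma goodM m n : good m -> good n -> good (m * n).
Proof.
move=> [Q1 [op1 [c1 [[l1 r1] i1]]]] [Q2 [op2 [c2 [[l2 r2] i2]]]].
exists ((Q1 * Q2)%type : finType), (fun x y => (op1 x.1 y.1, op2 x.2 y.2)).
split; first by rewrite card_prod c1 c2.
split; last by move=> [x1 x2] [y1 y2] /=; rewrite i1 i2.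
split=> -[a1 a2] [b1 b2].
- have [x1 [h1 u1]] := l1 a1 b1; have [x2 [h2 u2]] := l2 a2 b2.
  exists (x1, x2); split; first by rewrite /= h1 h2.
  by move=> [z1 z2] [] /u1 -> /u2 ->.
- have [x1 [h1 u1]] := r1 a1 b1; have [x2 [h2 u2]] := r2 a2 b2.
  exists (x1, x2); split; first by rewrite /= h1 h2.
  by move=> [z1 z2] [] /u1 -> /u2 ->.
Qed.

Lemma goodX m e : good m -> good (m ^ e).
Proof.
move=> gm; elim: e => [|e IH]; first exact: good1.
by rewrite expnS; apply: goodM.
Qed.

Definition tbl_ok (k : nat) (f : nat -> nat -> nat) : bool :=
  all (fun x => all (fun y => (f x y < k) && (f x (f y (f y x)) == y)) (iota 0 k)) (iota 0 k)
  && all (fun a => all (fun x => all (fun y =>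
        ((f a x == f a y) ==> (x == y)) && ((f x a == f y a) ==> (x == y)))
        (iota 0 k)) (iota 0 k)) (iota 0 k).

Lemma tbl_good k f : tbl_ok k.+1 f -> good k.+1.
Proof.
move=> /andP [/allP H1 /allP H2].
have mi (x : 'I_k.+1) : (x : nat) \in iota 0 k.+1 by rewrite mem_iota /= ltn_ord.
have Hlt (x y : 'I_k.+1) : f x y < k.+1.
  by have /andP[] := allP (H1 _ (mi x)) _ (mi y).
have Hid (x y : 'I_k.+1) : f x (f y (f y x)) = y.
  by apply/eqP; have /andP[] := allP (H1 _ (mi x)) _ (mi y).
have Hinj (a x y : 'I_k.+1) :
   ((f a x == f a y) ==> (x == y :> nat)) && ((f x a == f y a) ==> (x == y :> nat)).
  exact: allP (allP (H2 _ (mi a)) _ (mi x)) _ (mi y).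
pose op (x y : 'I_k.+1) : 'I_k.+1 := inord (f x y).
have opE x y : (op x y : nat) = f x y by rewrite inordK.
exists ('I_k.+1 : finType), op; split; first by rewrite card_ord.
split; last by move=> x y; apply: ord_inj; rewrite !opE; exact: Hid.
have injl a : injective (op a).
  move=> x y /(congr1 (@nat_of_ord _)); rewrite !opE => e; apply: ord_inj.
  by have /andP[/implyP h _] := Hinj a x y; apply/eqP/h/eqP.
have injr a : injective (op^~ a).
  move=> x y /(congr1 (@nat_of_ord _)); rewrite /= !opE => e; apply: ord_inj.
  by have /andP[_ /implyP h] := Hinj a x y; apply/eqP/h/eqP.
split=> a b.
- have [g _ gK] := injF_bij (injl a).
  by exists (g b); split; [exact: gK | move=> z <-; apply: (injl a); rewrite gK].
- have [g _ gK] := injF_bij (injr a).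
  by exists (g b); split; [exact: gK | move=> z <-; apply: (injr a); rewrite gK].
Qed.

Definition lin p a b := fun x y => (a * x + b * y) %% p.

Definition t4 := [:: [:: 0; 2; 3; 1]; [:: 1; 3; 2; 0]; [:: 2; 0; 1; 3]; [:: 3; 1; 0; 2]].
Definition t8 := [:: [:: 0; 2; 4; 6; 3; 1; 7; 5]; [:: 3; 1; 7; 5; 0; 2; 4; 6];
  [:: 6; 4; 2; 0; 5; 7; 1; 3]; [:: 5; 7; 1; 3; 6; 4; 2; 0]; [:: 7; 5; 3; 1; 4; 6; 0; 2];
  [:: 4; 6; 0; 2; 7; 5; 3; 1]; [:: 1; 3; 5; 7; 2; 0; 6; 4]; [:: 2; 0; 6; 4; 1; 3; 5; 7]].
Definition tf (t : seq (seq nat)) := fun x y => nth 0 (nth [::] t x) y.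

Lemma g3 : good 3. Proof. by apply: (@tbl_good 2 (lin 3 2 1)); vm_compute. Qed.
Lemma g4 : good 4. Proof. by apply: (@tbl_good 3 (tf t4)); vm_compute. Qed.
Lemma g5 : good 5. Proof. by apply: (@tbl_good 4 (lin 5 3 3)); vm_compute. Qed.
Lemma g7 : good 7. Proof. by apply: (@tbl_good 6 (lin 7 6 2)); vm_compute. Qed.
Lemma g8 : good 8. Proof. by apply: (@tbl_good 7 (tf t8)); vm_compute. Qed.
Lemma g11 : good 11. Proof. by apply: (@tbl_good 10 (lin 11 7 5)); vm_compute. Qed.
Lemma g23 : good 23. Proof. by apply: (@tbl_good 22 (lin 23 11 13)); vm_compute. Qed.

Theorem mainTheorem1 (n1 n2 n3 n4 n5 n6 n7 : nat) :
  let n := 3 ^ n1 * 4 ^ n2 * 5 ^ n3 * 7 ^ n4 * 8 ^ n5 * 11 ^ n6 * 23 ^ n7 in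
  exists (Q : finType) (op : Q -> Q -> Q),
    #|Q| = n /\ is_quasigroup op /\
    (forall x y : Q, op x (op y (op y x)) = y).
Proof.
move=> n; rewrite /n.
by repeat apply: goodM; apply: goodX;
  [exact: g3|exact: g4|exact: g5|exact: g7|exact: g8|exact: g11|exact: g23].
Qed.
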